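(* Let $n>1$, $m\ge1$, let $P$ be a pivot path of $v\in Z_{n,m}$ and let $I=[p_1+1,p_2]$ be a $P$-interval. (1) Assume $p_2=m+1$ and $P$ shifts left in $I$. If $\sum_{i=j}^{m+1}v_i\geq0$ for every $j\in I$, then no step of $P$ is a left shift at $m$ applied to a vertex whose entry $m+1$ equals $0$. (2) Assume $p_1=-1$ and $P$ shifts right in $I$. If $\sum_{i=0}^{j}v_i\geq0$ for every $j\in I$, then no step of $P$ is a right shift at $0$ applied to a vertex whose entry $0$ equals $0$.
   Context: Elements of $\mathbb{Z}_n$ are identified with representatives in $\{0,\dots,n-1\}$ (so $v_0,v_{m+1}$ are such integers in sums). $Z_{n,m}$ has vertices $u=(u_0,\dots,u_{m+1})\in\mathbb{Z}_n\times\{-1,0,1\}^m\times\mathbb{Z}_n$ with $\sum u_i\equiv0\pmod n$. A step from $v$ to $u$ is a left shift at $i$ ($0\le i\le m$) if $u_j=v_j$ for $j\notin\{i,i+1\}$, $u_i=v_i+1$, $u_{i+1}=v_{i+1}-1$, and a right shift at $i$ if $u_i=v_i-1$, $u_{i+1}=v_{i+1}+1$ (arithmetic in coordinates $0,m+1$ in $\mathbb{Z}_n$); vertices are adjacent iff related by such a shift. For a path $P$ from $v$ to the all-zero vertex $0$: $0\le p\le m$ is an inner wall if no step is a shift at $p$; $-1$ is a wall if no step is a left shift at $0$; $m+1$ is a wall if no step is a right shift at $m$. A $p$-pivot path of $v$ is a shortest path from $v$ to $0$ among those having $p$ as a wall; a pivot path is a $p$-pivot path for some $p$. If $p_1<\dots<p_t$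 are the inner walls of $P$, $p_0=-1$, $p_{t+1}=m+1$, the $P$-intervals are $[p_k+1,p_{k+1}]$. For a pivot path, all steps that are shifts at $j$ with $[j,j+1]\subseteq I$ go in one direction; $P$ shifts left (right) in $I$ accordingly. *)

(* Defs.v *)
From HB Require Import structures.
From mathcomp Require Import all_boot all_order all_algebra.
Set Implicit Arguments. Unset Strict Implicit. Unset Printing Implicit Defensive.
Import Order.TTheory GRing.Theory Num.Theory.
Local Open Scope ring_scope.

(* A vertex u = (u_0,...,u_{m+1}) of Z_{n,m} is a sequence of m+2 integers;
   u_0, u_{m+1} are representatives in {0,...,n-1} of elements of Z_n,
   the middle entries lie in {-1,0,1}, and the sum is 0 mod n. *)
Definition vertex (n m : nat) (u : seq int) : Prop :=
  [/\ size u = m.+2,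
      0 <= nth 0 u 0 < n%:Z,
      0 <= nth 0 u m.+1 < n%:Z,
      (forall k : nat, (0 < k <= m)%N -> nth 0 u k \in [:: -1; 0; 1]) &
      (n%:Z %| \sum_(i <- u) i)%Z].

Definition zero_vertex (m : nat) : seq int := nseq m.+2 0.

Inductive dir := Lsh | Rsh.
Definition dir_eqb (a b : dir) : bool :=
  match a, b with Lsh, Lsh | Rsh, Rsh => true | _, _ => false end.
Lemma dir_eqP : Equality.axiom dir_eqb.
Proof. by case; case; constructor. Qed.
HB.instance Definition _ := hasDecEq.Build dir dir_eqP.

Definition step := (dir * nat)%type.

(* update coordinate k (value x) by c; coordinates 0 and m+1 live in Z_n *)
Definition upd (n m k : nat) (x c : int) : int :=
  if c == 0 then x
  else if (k == 0)%N || (k == m.+1)%N then ((x + c) %% n%:Z)%Z else x + c.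

Definition apply_step (n m : nat) (st : step) (u : seq int) : seq int :=
  let e : int := if st.1 is Lsh then 1 else -1 in
  [seq upd n m k (nth 0 u k)
       (if k == st.2 then e else if k == st.2.+1 then - e else 0)
  | k <- iota 0 m.+2].

Definition walk (n m : nat) (u : seq int) (t : seq step) : seq int :=
  foldl (fun w st => apply_step n m st w) u t.

Definition is_path (n m : nat) (v : seq int) (s : seq step) : Prop :=
  [/\ (forall st, st \in s -> (st.2 <= m)%N),
      (forall k : nat, (k <= size s)%N -> vertex n m (walk n m v (take k s))) &
      walk n m v s = zero_vertex m].

Definition inner_wall (m : nat) (s : seq step) (p : int) : Prop :=
  0 <= p <= m%:Z /\ (forall st, st \in s -> st.2%:Z != p).

Definition is_wall (m : nat) (s : seq step) (p : int) : Prop :=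
  if p == -1 then (forall st, st \in s -> st != (Lsh, 0%N))
  else if p == (m.+1)%:Z then (forall st, st \in s -> st != (Rsh, m))
  else inner_wall m s p.

Definition pivot_path_at (n m : nat) (v : seq int) (s : seq step) (p : int) : Prop :=
  [/\ -1 <= p <= (m.+1)%:Z, is_path n m v s, is_wall m s p &
      forall s', is_path n m v s' -> is_wall m s' p -> (size s <= size s')%N].

Definition pivot_path (n m : nat) (v : seq int) (s : seq step) : Prop :=
  exists p : int, pivot_path_at n m v s p.

Definition P_interval (m : nat) (s : seq step) (a b : int) : Prop :=
  [/\ a = -1 \/ inner_wall m s a,
      b = (m.+1)%:Z \/ inner_wall m s b,
      a < b &
      forall q : int, a < q < b -> ~ inner_wall m s q].

Definition shifts_in (d : dir) (s : seq step) (a b : int) : Prop :=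
  forall st, st \in s -> a + 1 <= st.2%:Z -> st.2.+1%:Z <= b -> st.1 = d.

Definition step_applied_to (n m : nat) (v : seq int) (s : seq step)
  (st : step) (u : seq int) : Prop :=
  exists k : nat, [/\ (k < size s)%N, nth (Lsh, 0%N) s k = st &
                      walk n m v (take k s) = u].

(* Main.v *)
Require Import Defs.
From mathcomp Require Import all_boot all_order all_algebra.
From mathcomp Require Import zify ring lra.
Import Order.TTheory GRing.Theory Num.Theory.
Local Open Scope ring_scope.

Definition dsgn (d : dir) : int := if d is Lsh then 1 else -1.

Lemma size_apply n m st u : size (apply_step n m st u) = m.+2.
Proof. by rewrite /apply_step size_map size_iota. Qed.

Lemma upd0 n m k x : upd n m k x 0 = x.
Proof. by rewrite /upd eqxx. Qed.

Lemma upd_mid n m k x c : k != 0%N -> k != m.+1 -> upd n m k x c = x + c.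
Proof. by move=> /negbTE h1 /negbTE h2; rewrite /upd h1 h2 /=; case: eqP => // ->; rewrite addr0. Qed.

Lemma nth_apply n m d i u k : (i <= m)%N -> size u = m.+2 ->
  nth 0 (apply_step n m (d, i) u) k =
  nth 0 u k + (if k == i then upd n m i (nth 0 u i) (dsgn d) - nth 0 u i else 0)
            + (if k == i.+1 then upd n m i.+1 (nth 0 u i.+1) (- dsgn d) - nth 0 u i.+1 else 0).
Proof.
move=> him hs; case: (ltnP k m.+2) => hk; last first.
  rewrite (nth_default _ (_ : size u <= k)%N) ?hs //.
  rewrite (nth_default _ (_ : size (apply_step n m (d, i) u) <= k)%N) ?size_apply //.
  have -> : (k == i) = false by apply/negbTE; lia.
  have -> : (k == i.+1) = false by apply/negbTE; lia.
  by rewrite !addr0.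
rewrite /apply_step (nth_map 0%N) ?size_iota // nth_iota // add0n /=.
have [hd hd'] : (dsgn d == 0) = false /\ (- dsgn d == 0) = false by case: d.
have -> : (if d is Lsh then 1 else -1) = dsgn d by [].
case: (eqVneq k i) => [->|hki].
  have -> : (i == i.+1) = false by elim: i {him}.
  rewrite /upd hd; case: ifP => _; ring.
case: (eqVneq k i.+1) => [->|hki1].
  rewrite /upd hd'; case: ifP => _; ring.
by rewrite upd0; ring.
Qed.

Definition dA n m d i u := upd n m i (nth 0 u i) (dsgn d) - nth 0 u i.
Definition dB n m d i u := upd n m i.+1 (nth 0 u i.+1) (- dsgn d) - nth 0 u i.+1.

Lemma sum_pt (a b i : nat) (x : int) :
  \sum_(a <= k < b) (if k == i then x else 0) = if (a <= i < b)%N then x else 0.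
Proof.
elim: b => [|b IH]; first by rewrite big_geq //; case: ifP => // /andP[]; lia.
case: (leqP a b) => hab; last first.
  rewrite big_geq //; case: ifP => // /andP[]; lia.
rewrite big_nat_recr //= IH.
case: (eqVneq b i) => [<-|hbi].
  by rewrite ltnn andbF add0r hab ltnSn.
rewrite addr0; congr (if _ then _ else _); apply/idP/idP; lia.
Qed.

Lemma sum_apply n m d i u a b : (i <= m)%N -> size u = m.+2 ->
  \sum_(a <= k < b) nth 0 (apply_step n m (d, i) u) k =
  \sum_(a <= k < b) nth 0 u k + (if (a <= i < b)%N then dA n m d i u else 0)
   + (if (a <= i.+1 < b)%N then dB n m d i u else 0).
Proof.
move=> him hs.
under eq_bigr => k _ do rewrite nth_apply //.
by rewrite !big_split /= !sum_pt.
Qed.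

Lemma modp1 (n : nat) (x : int) : 0 <= x < n%:Z ->
  ((x + 1) %% n%:Z)%Z = if x + 1 == n%:Z then 0 else x + 1.
Proof.
move=> hx; case: eqP => h.
  by rewrite h modzz.
rewrite modz_small //; lia.
Qed.

Lemma modm1 (n : nat) (x : int) : 0 <= x < n%:Z ->
  ((x - 1) %% n%:Z)%Z = if x == 0 then n%:Z - 1 else x - 1.
Proof.
move=> hx; case: eqP => h.
  rewrite h add0r -(modzDl (-1) n%:Z) modz_small //; lia.
rewrite modz_small //; lia.
Qed.

Lemma upd_dvd n m k x c : (n%:Z %| upd n m k x c - x - c)%Z.
Proof.
rewrite /upd; case: eqP => [->|_]; first by rewrite subrr subr0 dvdz0.
case: ifP => _; last by rewrite (_ : x + c - x - c = 0) ?dvdz0 //; ring.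
have -> : ((x + c) %% n%:Z)%Z - x - c = - ((x + c) %/ n%:Z)%Z * n%:Z.
  move: (divz_eq (x + c) n%:Z); move: ((x + c) %/ n%:Z)%Z ((x + c) %% n%:Z)%Z => q r h.
  have -> : r - x - c = r - (x + c) by ring.
  rewrite h; ring.
by rewrite dvdz_mull.
Qed.

Lemma walk_takeS n m v s k : (k < size s)%N ->
  walk n m v (take k.+1 s) = apply_step n m (nth (Lsh, 0%N) s k) (walk n m v (take k s)).
Proof. by move=> hk; rewrite (take_nth (Lsh, 0%N) hk) /walk foldl_rcons. Qed.

Lemma walk_bound n m v s (F : seq int -> int) (c D : int) k0 :
  (forall k, (k < size s)%N -> F (walk n m v (take k s)) - c <= F (walk n m v (take k.+1 s))) ->
  (k0 < size s)%N ->
  F (walk n m v (take k0 s)) - c + D <= F (walk n m v (take k0.+1 s)) ->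
  F v - c * (size s)%:Z + D <= F (walk n m v s).
Proof.
move=> hstep hk0 hsp.
have L1 : forall k, (k <= size s)%N -> F v - c * k%:Z <= F (walk n m v (take k s)).
  elim=> [|k IH] hk; first by rewrite take0 mulr0 subr0.
  have := hstep k hk; have := IH (ltnW hk); rewrite -addn1 PoszD; lia.
have L2 : forall d, (k0.+1 + d <= size s)%N ->
    F (walk n m v (take k0.+1 s)) - c * d%:Z <= F (walk n m v (take (k0.+1 + d) s)).
  elim=> [|d IH] hd; first by rewrite addn0 mulr0 subr0.
  rewrite addnS in hd *; have := hstep (k0.+1 + d)%N hd; have := IH (ltnW hd); lia.
have := L2 (size s - k0.+1)%N; rewrite subnKC // take_size => /(_ (leqnn _)).
have := L1 k0 (ltnW hk0).
have -> : (size s)%:Z = k0%:Z + 1 + (size s - k0.+1)%N%:Z by lia.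
nia.
Qed.

Lemma sum_ge_term (a b j0 : nat) (F : nat -> int) :
  (forall j, (a <= j < b)%N -> 0 <= F j) -> (a <= j0 < b)%N ->
  F j0 <= \sum_(a <= j < b) F j.
Proof.
elim: b => [|b IH] hF hj; first lia.
have hab : (a <= b)%N by lia.
rewrite big_nat_recr //=.
case: (eqVneq j0 b) => [->|hne].
  have : 0 <= \sum_(a <= j < b) F j.
    by rewrite big_seq; apply: sumr_ge0 => j; rewrite mem_index_iota => hj'; apply: hF; lia.
  by move=> h; rewrite lerDr.
have h1 := IH (fun j hj' => hF j (ltac:(lia))) (ltac:(lia)).
have h2 := hF b (ltac:(lia)).
by apply: le_trans h1 _; rewrite lerDl.
Qed.

Lemma vertex_size n m u : vertex n m u -> size u = m.+2.
Proof. by case. Qed.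

Lemma path_local n m v s k : is_path n m v s -> (k < size s)%N ->
  let u := walk n m v (take k s) in let st := nth (Lsh, 0%N) s k in
  [/\ vertex n m u, st \in s, (st.2 <= m)%N &
      walk n m v (take k.+1 s) = apply_step n m st u].
Proof.
move=> [h1 h2 h3] hk /=; split.
- exact: h2 (ltnW hk).
- exact: mem_nth.
- exact: h1 (mem_nth _ hk).
- exact: walk_takeS.
Qed.

Lemma dA_L n m i u : (1 < n)%N -> vertex n m u -> (i <= m)%N ->
  dA n m Lsh i u = if i == 0%N then (if nth 0 u 0 + 1 == n%:Z then 1 - n%:Z else 1) else 1.
Proof.
move=> hn [hs h0 hm1 hmid hdv] him; rewrite /dA /=.
case: (eqVneq i 0%N) => [->|hi0]; last first.
  rewrite upd_mid; [ring | lia | lia].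
rewrite /upd /= modp1 //; case: ifP => /eqP h; lia.
Qed.

Lemma dB_L n m i u : (1 < n)%N -> vertex n m u -> (i <= m)%N ->
  dB n m Lsh i u = if i == m then (if nth 0 u m.+1 == 0 then n%:Z - 1 else -1) else -1.
Proof.
move=> hn [hs h0 hm1 hmid hdv] him; rewrite /dB /=.
case: (eqVneq i m) => [->|him']; last first.
  rewrite upd_mid; [ring | lia | lia].
rewrite /upd /= eqxx modm1 //; case: ifP => /eqP h; lia.
Qed.

Lemma dA_R n m i u : (1 < n)%N -> vertex n m u -> (i <= m)%N ->
  dA n m Rsh i u = if i == 0%N then (if nth 0 u 0 == 0 then n%:Z - 1 else -1) else -1.
Proof.
move=> hn [hs h0 hm1 hmid hdv] him; rewrite /dA /=.
case: (eqVneq i 0%N) => [->|hi0]; last first.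
  rewrite upd_mid; [ring | lia | lia].
rewrite /upd /= modm1 //; case: ifP => /eqP h; lia.
Qed.

Lemma dB_R n m i u : (1 < n)%N -> vertex n m u -> (i <= m)%N ->
  dB n m Rsh i u = if i == m then (if nth 0 u m.+1 + 1 == n%:Z then 1 - n%:Z else 1) else 1.
Proof.
move=> hn [hs h0 hm1 hmid hdv] him; rewrite /dB /=.
case: (eqVneq i m) => [->|him']; last first.
  rewrite upd_mid; [ring | lia | lia].
rewrite /upd /= eqxx opprK modp1 //; case: ifP => /eqP h; lia.
Qed.

Lemma apply_bnd n m st u k : (1 < n)%N -> size u = m.+2 -> (k == 0%N) || (k == m.+1) ->
  0 <= nth 0 u k < n%:Z -> 0 <= nth 0 (apply_step n m st u) k < n%:Z.
Proof.
move=> hn hs hk hx.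
have hk2 : (k < m.+2)%N by case/orP: hk => /eqP ->.
rewrite /apply_step (nth_map 0%N) ?size_iota // nth_iota // add0n /upd hk.
case: ifP => // _; apply/andP; split; first by apply: modz_ge0; lia.
by apply: ltz_pmod; lia.
Qed.

Lemma sum_seq_nth (u : seq int) : \sum_(x <- u) x = \sum_(0 <= k < size u) nth 0 u k.
Proof. by rewrite (big_nth 0). Qed.

Lemma vertex_apply n m d i u : (1 < n)%N -> vertex n m u -> (i <= m)%N ->
  (forall k, (0 < k <= m)%N -> -1 <= nth 0 (apply_step n m (d, i) u) k <= 1) ->
  vertex n m (apply_step n m (d, i) u).
Proof.
move=> hn hv him hmid; have hv' := hv; case: hv' => [hs h0 hm1 _ hdv]; split.
- exact: size_apply.
- by apply: apply_bnd.
- by apply: apply_bnd => //; rewrite eqxx orbT.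
- by move=> k hk; have := hmid k hk; rewrite !inE; lia.
rewrite sum_seq_nth size_apply sum_apply // -hs -sum_seq_nth hs.
rewrite ifT; last lia. rewrite ifT; last lia.
rewrite -addrA; apply: rpredD => //.
have -> : dA n m d i u + dB n m d i u =
  (upd n m i (nth 0 u i) (dsgn d) - nth 0 u i - dsgn d) +
  (upd n m i.+1 (nth 0 u i.+1) (- dsgn d) - nth 0 u i.+1 - (- dsgn d)).
  rewrite /dA /dB; ring.
by apply: rpredD; apply: upd_dvd.
Qed.

Lemma build n m (d : dir) (Ps : seq int -> Prop) (Psi : seq int -> int) :
  (forall u, vertex n m u -> Ps u -> 0 <= Psi u) ->
  (forall u, vertex n m u -> Ps u -> Psi u = 0 -> u = zero_vertex m) ->
  (forall u, vertex n m u -> Ps u -> 0 < Psi u -> exists i, [/\ (i <= m)%N,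
     vertex n m (apply_step n m (d, i) u), Ps (apply_step n m (d, i) u) &
     Psi (apply_step n m (d, i) u) = Psi u - 1]) ->
  forall u, vertex n m u -> Ps u -> exists t, [/\ is_path n m u t,
     (forall st, st \in t -> st.1 = d) & (size t)%:Z = Psi u].
Proof.
move=> H0 H1 H2.
suff: forall N : nat, forall u, vertex n m u -> Ps u -> Psi u = N%:Z -> exists t, [/\ is_path n m u t,
     (forall st, st \in t -> st.1 = d) & (size t)%:Z = Psi u].
  move=> HN u hv hp; have := H0 u hv hp => h0.
  have [N hN] : exists N : nat, Psi u = N%:Z by exists (absz (Psi u)); lia.
  exact: HN hv hp hN.
elim=> [|N IH] u hv hp hN.
  exists [::]; split; last by rewrite hN.
  - split.
    + by [].
    + by move=> k; rewrite leqn0 => /eqP ->.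
    + by rewrite /= (H1 u hv hp hN).
  - by [].
have [i [him hv' hp' hPsi]] := H2 u hv hp (ltac:(rewrite hN; lia)).
have [t [[ht1 ht2 ht3] htd hts]] := IH _ hv' hp' (ltac:(rewrite hPsi hN; lia)).
exists ((d, i) :: t); split.
- split.
  + by move=> st; rewrite inE => /orP[/eqP -> //|]; apply: ht1.
  + by case=> [|k] //= hk; apply: ht2.
  + by [].
- by move=> st; rewrite inE => /orP[/eqP -> //|]; apply: htd.
- rewrite /= hPsi in hts *; lia.
Qed.

Lemma path_step n m v s k d i : is_path n m v s -> (k < size s)%N ->
  nth (Lsh, 0%N) s k = (d, i) ->
  [/\ vertex n m (walk n m v (take k s)), (d, i) \in s, (i <= m)%N &
      walk n m v (take k.+1 s) = apply_step n m (d, i) (walk n m v (take k s))].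
Proof. by move=> hp hk E; have := @path_local n m v s k hp hk; rewrite /= E. Qed.

Definition Ssum m j (u : seq int) := \sum_(j <= k < m.+2) nth 0 u k.
Definition Tsum j (u : seq int) := \sum_(0 <= k < j.+1) nth 0 u k.

Lemma S_apply n m d i u j : (i <= m)%N -> size u = m.+2 ->
  Ssum m j (apply_step n m (d, i) u) = Ssum m j u
   + (if (j <= i)%N then dA n m d i u else 0) + (if (j <= i.+1)%N then dB n m d i u else 0).
Proof.
move=> him hs; rewrite /Ssum sum_apply //.
have h1 : (i < m.+2)%N by lia.
have h2 : (i.+1 < m.+2)%N by lia.
by rewrite h1 h2 !andbT.
Qed.

Lemma T_apply n m d i u j : (i <= m)%N -> size u = m.+2 ->
  Tsum j (apply_step n m (d, i) u) = Tsum j u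
   + (if (i <= j)%N then dA n m d i u else 0) + (if (i < j)%N then dB n m d i u else 0).
Proof. by move=> him hs; rewrite /Tsum sum_apply. Qed.

Lemma S_rec m j u : (j < m.+2)%N -> Ssum m j u = nth 0 u j + Ssum m j.+1 u.
Proof. by move=> hj; rewrite /Ssum big_ltn. Qed.

Lemma S_end m u : Ssum m m.+2 u = 0.
Proof. by rewrite /Ssum big_geq. Qed.

Lemma T_rec j u : Tsum j.+1 u = Tsum j u + nth 0 u j.+1.
Proof. by rewrite /Tsum big_nat_recr. Qed.

Lemma T_0 u : Tsum 0 u = nth 0 u 0.
Proof. by rewrite /Tsum big_nat1. Qed.

Lemma sum_S0 m u : size u = m.+2 -> \sum_(x <- u) x = Ssum m 0 u.
Proof. by move=> hs; rewrite sum_seq_nth hs. Qed.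

Lemma sum_T m u : size u = m.+2 -> \sum_(x <- u) x = Tsum m.+1 u.
Proof. by move=> hs; rewrite sum_seq_nth hs. Qed.

Lemma S_zero m j : Ssum m j (zero_vertex m) = 0.
Proof. by rewrite /Ssum big1 // => k _; rewrite nth_nseq; case: ifP. Qed.

Lemma T_zero m j : Tsum j (zero_vertex m) = 0.
Proof. by rewrite /Tsum big1 // => k _; rewrite nth_nseq; case: ifP. Qed.

Lemma walk_end n m v s : is_path n m v s -> walk n m v s = zero_vertex m.
Proof. by case. Qed.


Arguments path_step {n m v s k d i} _ _ _.
Arguments vertex_size {n m u} _.
Arguments walk_end {n m v s} _.



Lemma part1_inner n m v s a : (1 < n)%N -> is_path n m v s -> (a <= m)%N ->
  (forall st, st \in s -> st.2 != a) ->
  (forall st, st \in s -> (a < st.2)%N -> st.1 = Lsh) ->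
  0 <= Ssum m a.+1 v ->
  forall k, (k < size s)%N -> nth (Lsh, 0%N) s k = (Lsh, m) ->
  nth 0 (walk n m v (take k s)) m.+1 != 0.
Proof.
move=> hn hp ham hwall hL hv k hk E; apply/negP => /eqP hz.
have H : forall k', (k' < size s)%N -> Ssum m a.+1 (walk n m v (take k' s)) - 0 <=
    Ssum m a.+1 (walk n m v (take k'.+1 s)).
  move=> k' hk'; case E' : (nth (Lsh, 0%N) s k') => [d i].
  have [hv1 hin1 him1 hw1] := path_step hp hk' E'.
  rewrite hw1 S_apply ?(vertex_size hv1) // subr0.
  have hia := hwall _ hin1; rewrite /= in hia.
  case: (ltnP a i) => hai; last first.
    have h1 : (a < i)%N = false by lia.
    have h2 : (a < i.+1)%N = false by lia.
    by rewrite ?h1 ?h2 !addr0.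
  have hd := hL _ hin1 hai; rewrite /= in hd; rewrite hd.
  have h1 : (a < i)%N = true by lia.
  have h2 : (a < i.+1)%N = true by lia.
  have h3 : (i == 0%N) = false by lia.
  rewrite dA_L // dB_L // ?h1 ?h2 ?h3.
  set x := Ssum _ _ _.
  case: ifP => _; [case: ifP => _|]; lia.
have := @walk_bound n m v s (Ssum m a.+1) 0 n%:Z k H hk.
rewrite (walk_end hp) S_zero.
have [hv0 hin0 _ hw0] := path_step hp hk E.
have hma : (a < m)%N by have := hwall _ hin0; rewrite /=; lia.
rewrite hw0 S_apply ?(vertex_size hv0) // dA_L // dB_L // hz eqxx.
have h1 : (a < m)%N = true by lia.
have h2 : (a < m.+1)%N = true by lia.
have h3 : (m == 0%N) = false by lia.
rewrite h1 h2 h3.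
set x := Ssum _ _ _; set y := Ssum _ _ v.
rewrite eqxx => h; have := h ltac:(lia); lia.
Qed.

Lemma part2_inner n m v s b : (1 < n)%N -> is_path n m v s -> (b <= m)%N ->
  (forall st, st \in s -> st.2 != b) ->
  (forall st, st \in s -> (st.2 < b)%N -> st.1 = Rsh) ->
  0 <= Tsum b v ->
  forall k, (k < size s)%N -> nth (Lsh, 0%N) s k = (Rsh, 0%N) ->
  nth 0 (walk n m v (take k s)) 0 != 0.
Proof.
move=> hn hp hbm hwall hR hv k hk E; apply/negP => /eqP hz.
have H : forall k', (k' < size s)%N -> Tsum b (walk n m v (take k' s)) - 0 <=
    Tsum b (walk n m v (take k'.+1 s)).
  move=> k' hk'; case E' : (nth (Lsh, 0%N) s k') => [d i].
  have [hv1 hin1 him1 hw1] := path_step hp hk' E'.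
  rewrite hw1 T_apply ?(vertex_size hv1) // subr0.
  have hib := hwall _ hin1; rewrite /= in hib.
  case: (ltnP i b) => hbi; last first.
    have h1 : (i <= b)%N = false by lia.
    by rewrite ?h1 !addr0.
  have hd := hR _ hin1 hbi; rewrite /= in hd; rewrite hd.
  have h1 : (i <= b)%N = true by lia.
  have h3 : (i == m) = false by lia.
  rewrite dA_R // dB_R // ?h1 ?h3.
  set x := Tsum _ _.
  case: ifP => _; [case: ifP => _|]; lia.
have := @walk_bound n m v s (Tsum b) 0 n%:Z k H hk.
rewrite (walk_end hp) T_zero.
have [hv0 hin0 _ hw0] := path_step hp hk E.
have hb0 : (0 < b)%N by have := hwall _ hin0; rewrite /=; lia.
rewrite hw0 T_apply ?(vertex_size hv0) // dA_R // dB_R // hz eqxx.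
have h3 : (0%N == m) = false by lia.
rewrite hb0 h3.
set x := Tsum _ _; set y := Tsum _ v.
rewrite eqxx leq0n => h; have := h ltac:(lia); lia.
Qed.



Lemma vmid n m u k : vertex n m u -> (0 < k <= m)%N -> -1 <= nth 0 u k <= 1.
Proof. by case=> _ _ _ h _ hk; have := h k hk; rewrite !inE; lia. Qed.

Arguments vmid {n m u k}.

Lemma vbnd0 n m u : vertex n m u -> 0 <= nth 0 u 0 < n%:Z.
Proof. by case. Qed.

Lemma vbnd1 n m u : vertex n m u -> 0 <= nth 0 u m.+1 < n%:Z.
Proof. by case. Qed.

Lemma dvd_small (n : nat) (x : int) : (n%:Z %| x)%Z -> 0 <= x < n%:Z -> x = 0.
Proof. move=> /dvdz_mod0P h hx; rewrite modz_small in h => //. Qed.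

Definition wrapL (m i : nat) (u : seq int) : bool := (i == m) && (nth 0 u m.+1 == 0).

Lemma S_step_L n m i u j : (1 < n)%N -> (0 < m)%N -> vertex n m u -> (i <= m)%N -> (1 <= j <= m.+1)%N ->
  Ssum m j (apply_step n m (Lsh, i) u) = Ssum m j u
    + (if wrapL m i u then n%:Z else 0) - (if j == i.+1 then 1 else 0).
Proof.
move=> hn hm hv him hj; rewrite S_apply ?(vertex_size hv) // dA_L // dB_L // /wrapL.
set x := Ssum _ _ _.
repeat (case: ifP => ? /=); lia.
Qed.

Definition Psi1 m (u : seq int) := \sum_(1 <= j < m.+2) Ssum m j u.
Definition Ps1 m (u : seq int) := forall j, (1 <= j <= m.+1)%N -> 0 <= Ssum m j u.

Lemma Psi1_step n m i u : (1 < n)%N -> (0 < m)%N -> vertex n m u -> (i <= m)%N ->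
  Psi1 m (apply_step n m (Lsh, i) u) = Psi1 m u
    + (if wrapL m i u then n%:Z *+ m.+1 else 0) - 1.
Proof.
move=> hn hm hv him; rewrite /Psi1.
rewrite (eq_big_nat _ _ (F2 := fun j => Ssum m j u + (if wrapL m i u then n%:Z else 0)
   - (if j == i.+1 then 1 else 0))); last by move=> j hj; rewrite S_step_L.
rewrite sumrB big_split /= sum_pt sumr_const_nat.
have -> : (1 <= i.+1 < m.+2)%N = true by lia.
by case: ifP => _; rewrite ?mul0rn // subSS subn0.
Qed.

Lemma Psi1_ge0 m u : Ps1 m u -> 0 <= Psi1 m u.
Proof.
move=> h; rewrite /Psi1 big_seq; apply: sumr_ge0 => j; rewrite mem_index_iota => hj.
apply: h; lia.
Qed.

Lemma Psi1_zero_vertex m : Psi1 m (zero_vertex m) = 0.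
Proof. by rewrite /Psi1 big1 // => j _; rewrite S_zero. Qed.

Lemma Psi1_zero n m u : vertex n m u -> Ps1 m u -> Psi1 m u = 0 -> u = zero_vertex m.
Proof.
move=> hv hp hz.
have hS : forall j, (1 <= j <= m.+2)%N -> Ssum m j u = 0.
  move=> j hj; case: (eqVneq j m.+2) => [->|hj2]; first exact: S_end.
  have h1 := hp j (ltac:(lia)).
  have h2 : Ssum m j u <= Psi1 m u.
    apply: sum_ge_term; last lia.
    by move=> j' hj'; apply: hp; lia.
  lia.
have hk : forall k, (1 <= k <= m.+1)%N -> nth 0 u k = 0.
  move=> k hk; have := @S_rec m k u (ltac:(lia) : (k < m.+2)%N).
  rewrite hS ?hS; lia.
have h0 : nth 0 u 0 = 0.
  case: hv => hs h0 _ _ hdv.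
  have e : Ssum m 0 u = nth 0 u 0 by rewrite S_rec // hS ?addr0 //; lia.
  rewrite (@sum_S0 m u hs) e in hdv.
  exact: dvd_small hdv h0.
have hs := vertex_size hv.
apply: (@eq_from_nth _ 0); first by rewrite size_nseq.
move=> k; rewrite hs => hk2; rewrite nth_nseq hk2.
case: k hk2 => [|k] hk2 //; apply: hk; lia.
Qed.

Definition good1 m (u : seq int) i := [/\ (i <= m)%N, 1 <= Ssum m i.+1 u, 1 <= nth 0 u i.+1 &
  i = 0%N \/ nth 0 u i <= 0].

Lemma goodA1 m u : forall k, (1 <= k <= m.+1)%N -> 1 <= nth 0 u k -> 1 <= Ssum m k u ->
  exists i, good1 m u i.
Proof.
elim=> [|k IH] hk hu hS; first lia.
case: (eqVneq k 0%N) => [hk0|hk0].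
  by exists 0%N; subst k; split => //; left.
case: (lerP (nth 0 u k) 0) => huk.
  exists k; split => //; try lia; by right.
apply: IH; [lia | lia |].
rewrite S_rec; last lia.
move: huk hS; set a := nth 0 u k; set y := Ssum m k.+1 u; lia.
Qed.

Lemma goodB1 m u : Ps1 m u -> forall r, (r <= m.+1)%N ->
  (forall j, (m.+2 - r <= j <= m.+1)%N -> Ssum m j u = 0) \/ exists i, good1 m u i.
Proof.
move=> hp; elim=> [|r IH] hr.
  by left => j hj; lia.
case: (IH (ltac:(lia))) => [hz|]; last by right.
set j := (m.+1 - r)%N.
have hj1 : (1 <= j <= m.+1)%N by lia.
have hSj := hp j hj1.
case: (eqVneq (Ssum m j u) 0) => [hj0|hjne].
  left => j' hj'; case: (eqVneq j' j) => [->//|hne]; apply: hz; lia.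
right.
have hS1 : Ssum m j.+1 u = 0.
  case: (eqVneq r 0%N) => [hr0|hr0].
    by rewrite /j hr0 subn0 S_end.
  apply: hz; lia.
have huj : nth 0 u j = Ssum m j u.
  by rewrite (@S_rec m j u) ?hS1 ?addr0 //; lia.
apply: (@goodA1 m u j hj1).
- move: hSj hjne huj; set a := nth 0 u j; set y := Ssum m j u; lia.
- move: hSj hjne; set y := Ssum m j u; lia.
Qed.

Lemma greedy1 n m u : (1 < n)%N -> (0 < m)%N -> vertex n m u -> Ps1 m u -> 0 < Psi1 m u ->
  exists i, [/\ (i <= m)%N, vertex n m (apply_step n m (Lsh, i) u),
     Ps1 m (apply_step n m (Lsh, i) u) &
     Psi1 m (apply_step n m (Lsh, i) u) = Psi1 m u - 1].
Proof.
move=> hn hm hv hp hpos.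
case: (@goodB1 m u hp m.+1 (leqnn m.+1)) => [hz|[i [him hSi hui hi0]]].
  have : Psi1 m u = 0.
    rewrite /Psi1 (eq_big_nat _ _ (F2 := fun _ => 0)) ?big1_eq // => j hj.
    apply: hz; lia.
  move=> h; rewrite h in hpos; lia.
have hw : wrapL m i u = false.
  rewrite /wrapL; case: (eqVneq i m) => [hi|] //=; subst i.
  by apply/negP => /eqP h; rewrite h in hui.
have hs := vertex_size hv.
exists i; split => //.
- apply: vertex_apply => // k hk; rewrite nth_apply // -/(dA n m Lsh i u) -/(dB n m Lsh i u) dA_L // dB_L //.
  have := vmid hv hk.
  case: (eqVneq k i) => [hki|hki].
    subst k; have hi : (i == 0%N) = false by lia.
    have hii : (i == i.+1) = false by lia.
    rewrite hi hii; case: hi0 => [?|]; first lia.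
    set a := nth 0 u i; lia.
  case: (eqVneq k i.+1) => [hki1|hki1].
    subst k; have him' : (i == m) = false by lia.
    rewrite ?eqxx him'.
    have := vmid hv hk; move: hui; set a := nth 0 u i.+1; lia.
  set a := nth 0 u k; lia.
- move=> j hj; rewrite S_step_L // hw.
  have := hp j hj.
  case: (eqVneq j i.+1) => [->|hne]; last by set y := Ssum m j u; lia.
  by move: hSi; set y := Ssum m i.+1 u; lia.
- by rewrite Psi1_step // hw addr0.
Qed.

Lemma part1_full n m v s : (1 < n)%N -> (0 < m)%N -> vertex n m v -> is_path n m v s ->
  (forall st, st \in s -> st.1 = Lsh) ->
  (forall s', is_path n m v s' -> (forall st, st \in s' -> st != (Rsh, m)) ->
     (size s <= size s')%N) ->
  Ps1 m v ->
  forall k, (k < size s)%N -> nth (Lsh, 0%N) s k = (Lsh, m) ->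
  nth 0 (walk n m v (take k s)) m.+1 != 0.
Proof.
move=> hn hm hv hp hL hmin hPs k hk E; apply/negP => /eqP hz.
have [t [ht htL hts]] := @build n m Lsh (Ps1 m) (Psi1 m) (fun u _ hp => @Psi1_ge0 m u hp)
  (@Psi1_zero n m) (fun u => @greedy1 n m u hn hm) v hv hPs.
have hst := hmin t ht (fun st hst => ltac:(by rewrite (surjective_pairing st) (htL st hst))).
have H : forall k', (k' < size s)%N -> Psi1 m (walk n m v (take k' s)) - 1 <=
    Psi1 m (walk n m v (take k'.+1 s)).
  move=> k' hk'; case E' : (nth (Lsh, 0%N) s k') => [d i].
  have [hv1 hin1 him1 hw1] := path_step hp hk' E'.
  have hd := hL _ hin1; rewrite /= in hd; subst d.
  rewrite hw1 Psi1_step //.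
  have : 0 <= n%:Z *+ m.+1 by apply: mulrn_wge0.
  set x := Psi1 m _; set y := n%:Z *+ _; case: ifP => _; lia.
have := @walk_bound n m v s (Psi1 m) 1 (n%:Z *+ m.+1) k H hk.
rewrite (walk_end hp) Psi1_zero_vertex.
have [hv0 hin0 _ hw0] := path_step hp hk E.
rewrite hw0 Psi1_step // /wrapL hz !eqxx /=.
have : 0 < n%:Z *+ m.+1 by apply: mulrn_wgt0; lia.
move: hts hst; set x := Psi1 m _; set y := Psi1 m v; set z := n%:Z *+ _.
move=> hts hst hz0 h; have := h ltac:(lia); lia.
Qed.

Definition wrapR (i : nat) (u : seq int) : bool := (i == 0%N) && (nth 0 u 0 == 0).

Lemma T_step_R n m i u j : (1 < n)%N -> (0 < m)%N -> vertex n m u -> (i <= m)%N -> (j <= m)%N ->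
  Tsum j (apply_step n m (Rsh, i) u) = Tsum j u
    + (if wrapR i u then n%:Z else 0) - (if j == i then 1 else 0).
Proof.
move=> hn hm hv him hj; rewrite T_apply ?(vertex_size hv) // dA_R // dB_R // /wrapR.
set x := Tsum _ _.
repeat (case: ifP => ? /=); lia.
Qed.

Definition Psi2 m (u : seq int) := \sum_(0 <= j < m.+1) Tsum j u.
Definition Ps2 m (u : seq int) := forall j, (j <= m)%N -> 0 <= Tsum j u.

Lemma Psi2_step n m i u : (1 < n)%N -> (0 < m)%N -> vertex n m u -> (i <= m)%N ->
  Psi2 m (apply_step n m (Rsh, i) u) = Psi2 m u
    + (if wrapR i u then n%:Z *+ m.+1 else 0) - 1.
Proof.
move=> hn hm hv him; rewrite /Psi2.
rewrite (eq_big_nat _ _ (F2 := fun j => Tsum j u + (if wrapR i u then n%:Z else 0)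
   - (if j == i then 1 else 0))); last by move=> j hj; rewrite T_step_R //; lia.
rewrite sumrB big_split /= sum_pt sumr_const_nat.
have -> : (0 <= i < m.+1)%N = true by lia.
by case: ifP => _; rewrite ?mul0rn // subn0.
Qed.

Lemma Psi2_ge0 m u : Ps2 m u -> 0 <= Psi2 m u.
Proof.
move=> h; rewrite /Psi2 big_seq; apply: sumr_ge0 => j; rewrite mem_index_iota => hj.
apply: h; lia.
Qed.

Lemma Psi2_zero_vertex m : Psi2 m (zero_vertex m) = 0.
Proof. by rewrite /Psi2 big1 // => j _; rewrite T_zero. Qed.

Lemma Psi2_zero n m u : vertex n m u -> Ps2 m u -> Psi2 m u = 0 -> u = zero_vertex m.
Proof.
move=> hv hp hz.
have hT : forall j, (j <= m)%N -> Tsum j u = 0.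
  move=> j hj.
  have h1 := hp j hj.
  have h2 : Tsum j u <= Psi2 m u.
    apply: sum_ge_term; last lia.
    by move=> j' hj'; apply: hp; lia.
  lia.
have hk : forall k, (k <= m)%N -> nth 0 u k = 0.
  case=> [|k] hk; first by rewrite -T_0 hT.
  have := T_rec k u; rewrite !hT //; lia.
have h0 : nth 0 u m.+1 = 0.
  case: hv => hs _ h0 _ hdv.
  have e : Tsum m.+1 u = nth 0 u m.+1 by rewrite T_rec hT // add0r.
  rewrite (@sum_T m u hs) e in hdv.
  exact: dvd_small hdv h0.
have hs := vertex_size hv.
apply: (@eq_from_nth _ 0); first by rewrite size_nseq.
move=> k; rewrite hs => hk2; rewrite nth_nseq hk2.
case: (eqVneq k m.+1) => [->//|hne]; apply: hk; lia.
Qed.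

Definition good2 m (u : seq int) i := [/\ (i <= m)%N, 1 <= Tsum i u, 1 <= nth 0 u i &
  i = m \/ nth 0 u i.+1 <= 0].

Lemma goodA2 m u : forall d k, (k + d = m)%N -> 1 <= nth 0 u k -> 1 <= Tsum k u ->
  exists i, good2 m u i.
Proof.
elim=> [|d IH] k hkd hu hT.
  by exists k; split => //; [lia | left; lia].
case: (lerP (nth 0 u k.+1) 0) => huk.
  exists k; split => //; try lia; by right.
apply: (IH k.+1); first lia.
  by move: huk; set a := nth 0 u k.+1; lia.
rewrite T_rec; move: huk hT; set a := nth 0 u k.+1; set y := Tsum k u; lia.
Qed.

Lemma goodB2 m u : Ps2 m u -> forall r, (r <= m.+1)%N ->
  (forall j, (j < r)%N -> Tsum j u = 0) \/ exists i, good2 m u i.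
Proof.
move=> hp; elim=> [|r IH] hr.
  by left => j hj; lia.
case: (IH (ltac:(lia))) => [hz|]; last by right.
have hTr := hp r (ltac:(lia)).
case: (eqVneq (Tsum r u) 0) => [hr0|hrne].
  left => j hj; case: (eqVneq j r) => [->//|hne]; apply: hz; lia.
right.
have hur : nth 0 u r = Tsum r u.
  move: hz; case: (r) => [|r'] hz; first by rewrite T_0.
  by rewrite T_rec hz // add0r.
apply: (@goodA2 m u (m - r)%N r); first lia.
- move: hTr hrne hur; set a := nth 0 u r; set y := Tsum r u; lia.
- move: hTr hrne; set y := Tsum r u; lia.
Qed.

Lemma greedy2 n m u : (1 < n)%N -> (0 < m)%N -> vertex n m u -> Ps2 m u -> 0 < Psi2 m u ->
  exists i, [/\ (i <= m)%N, vertex n m (apply_step n m (Rsh, i) u),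
     Ps2 m (apply_step n m (Rsh, i) u) &
     Psi2 m (apply_step n m (Rsh, i) u) = Psi2 m u - 1].
Proof.
move=> hn hm hv hp hpos.
case: (@goodB2 m u hp m.+1 (leqnn m.+1)) => [hz|[i [him hTi hui hi0]]].
  have : Psi2 m u = 0.
    rewrite /Psi2 (eq_big_nat _ _ (F2 := fun _ => 0)) ?big1_eq //; try (move=> j hj; apply: hz; lia).
  move=> h; rewrite h in hpos; lia.
have hw : wrapR i u = false.
  rewrite /wrapR; case: (eqVneq i 0%N) => [hi|] //=; subst i.
  by apply/negP => /eqP h; rewrite h in hui.
have hs := vertex_size hv.
exists i; split => //.
- apply: vertex_apply => // k hk; rewrite nth_apply // -/(dA n m Rsh i u) -/(dB n m Rsh i u) dA_R // dB_R //.
  have := vmid hv hk.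
  case: (eqVneq k i) => [hki|hki].
    subst k; have hi : (i == 0%N) = false by lia.
    have hii : (i == i.+1) = false by lia.
    rewrite hi hii.
    move: hui; set a := nth 0 u i; lia.
  case: (eqVneq k i.+1) => [hki1|hki1].
    subst k; have him' : (i == m) = false by lia.
    rewrite ?eqxx him'.
    case: hi0 => [?|]; first lia.
    have := vmid hv hk; set a := nth 0 u i.+1; set b := nth 0 u i; 
    repeat (case: ifP => ? /=); lia.
  set a := nth 0 u k; lia.
- move=> j hj; rewrite T_step_R // hw.
  have := hp j hj.
  case: (eqVneq j i) => [->|hne]; last by set y := Tsum j u; lia.
  by move: hTi; set y := Tsum i u; lia.
- by rewrite Psi2_step // hw addr0.
Qed.

Lemma part2_full n m v s : (1 < n)%N -> (0 < m)%N -> vertex n m v -> is_path n m v s ->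
  (forall st, st \in s -> st.1 = Rsh) ->
  (forall s', is_path n m v s' -> (forall st, st \in s' -> st != (Lsh, 0%N)) ->
     (size s <= size s')%N) ->
  Ps2 m v ->
  forall k, (k < size s)%N -> nth (Lsh, 0%N) s k = (Rsh, 0%N) ->
  nth 0 (walk n m v (take k s)) 0 != 0.
Proof.
move=> hn hm hv hp hR hmin hPs k hk E; apply/negP => /eqP hz.
have [t [ht htR hts]] := @build n m Rsh (Ps2 m) (Psi2 m) (fun u _ hp => @Psi2_ge0 m u hp)
  (@Psi2_zero n m) (fun u => @greedy2 n m u hn hm) v hv hPs.
have hst := hmin t ht (fun st hst => ltac:(by rewrite (surjective_pairing st) (htR st hst))).
have H : forall k', (k' < size s)%N -> Psi2 m (walk n m v (take k' s)) - 1 <=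
    Psi2 m (walk n m v (take k'.+1 s)).
  move=> k' hk'; case E' : (nth (Lsh, 0%N) s k') => [d i].
  have [hv1 hin1 him1 hw1] := path_step hp hk' E'.
  have hd := hR _ hin1; rewrite /= in hd; subst d.
  rewrite hw1 Psi2_step //.
  have : 0 <= n%:Z *+ m.+1 by apply: mulrn_wge0.
  set x := Psi2 m _; set y := n%:Z *+ _; case: ifP => _; lia.
have := @walk_bound n m v s (Psi2 m) 1 (n%:Z *+ m.+1) k H hk.
rewrite (walk_end hp) Psi2_zero_vertex.
have [hv0 hin0 _ hw0] := path_step hp hk E.
rewrite hw0 Psi2_step // /wrapR hz !eqxx /=.
have : 0 < n%:Z *+ m.+1 by apply: mulrn_wgt0; lia.
move: hts hst; set x := Psi2 m _; set y := Psi2 m v; set z := n%:Z *+ _.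
move=> hts hst hz0 h; have := h ltac:(lia); lia.
Qed.



Theorem lemma5p14 (n m : nat) (v : seq int) (s : seq step) (p1 p2 : int) :
  (1 < n)%N -> (1 <= m)%N -> vertex n m v -> pivot_path n m v s ->
  P_interval m s p1 p2 ->
  (* (1) *)
  (p2 = (m.+1)%:Z -> shifts_in Lsh s p1 p2 ->
   (forall j : nat, p1 + 1 <= j%:Z <= p2 ->
      0 <= \sum_(j <= i < m.+2) nth 0 v i) ->
   forall u : seq int, step_applied_to n m v s (Lsh, m) u ->
     nth 0 u m.+1 != 0) /\
  (* (2) *)
  (p1 = -1 -> shifts_in Rsh s p1 p2 ->
   (forall j : nat, p1 + 1 <= j%:Z <= p2 ->
      0 <= \sum_(0 <= i < j.+1) nth 0 v i) ->
   forall u : seq int, step_applied_to n m v s (Rsh, 0%N) u ->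
     nth 0 u 0 != 0).
Proof.
move=> hn hm hv [p [hprange hp hwall hmin]] [ha hb hab hno].
have hpm : forall st, st \in s -> (st.2 <= m)%N by case: hp.
split.
- move=> hp2 hL hsum u [k [hk E <-]]; subst p2.
  case: ha => [hp1|[hp1r hp1w]].
  + subst p1.
    have hallL : forall st, st \in s -> st.1 = Lsh.
      move=> st hst; apply: hL => //; have := hpm st hst; lia.
    have hpe : p = (m.+1)%:Z.
      move: hwall; rewrite /is_wall; case: eqP => [hpn|_].
        move=> hw; exfalso; apply: (hno 0); first lia.
        split; first lia.
        move=> st hst; apply/negP => /eqP h0.
        have := hw st hst; rewrite (surjective_pairing st) (hallL st hst).
        have -> : st.2 = 0%N by lia.
        by rewrite eqxx.
      case: eqP => // _ hiw; exfalso; apply: (hno p) => //.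
      by case: hiw => hr _; lia.
    subst p.
    have H1 : forall s', is_path n m v s' -> (forall st, st \in s' -> st != (Rsh, m)) ->
        (size s <= size s')%N.
      move=> s' hs' hw'; apply: hmin => //.
      rewrite /is_wall; have -> : ((m.+1)%:Z == -1) = false by lia.
      by rewrite eqxx.
    have H2 : Ps1 m v by move=> j hj; apply: hsum; lia.
    exact: (@part1_full n m v s hn hm hv hp hallL H1 H2 k hk E).
  + have [a ha'] : exists a : nat, p1 = a%:Z by exists (absz p1); lia.
    subst p1.
    have H1 : (a <= m)%N by lia.
    have H2 : forall st, st \in s -> st.2 != a.
      move=> st hst; have := hp1w st hst; lia.
    have H3 : forall st, st \in s -> (a < st.2)%N -> st.1 = Lsh.
      move=> st hst hast; apply: hL => //; have := hpm st hst; lia.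
    have H4 := hsum a.+1 ltac:(lia).
    exact: (@part1_inner n m v s a hn hp H1 H2 H3 H4 k hk E).
- move=> hp1 hR hsum u [k [hk E <-]]; subst p1.
  case: hb => [hp2|[hp2r hp2w]].
  + subst p2.
    have hallR : forall st, st \in s -> st.1 = Rsh.
      move=> st hst; apply: hR => //; have := hpm st hst; lia.
    have hpe : p = -1.
      move: hwall; rewrite /is_wall; case: eqP => [//|_].
      case: eqP => [hpm1|_].
        move=> hw; exfalso; apply: (hno m%:Z); first lia.
        split; first lia.
        move=> st hst; apply/negP => /eqP h0.
        have := hw st hst; rewrite (surjective_pairing st) (hallR st hst).
        have -> : st.2 = m by lia.
        by rewrite eqxx.
      move=> hiw; exfalso; apply: (hno p) => //.
      by case: hiw => hr _; lia.
    subst p.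
    have H1 : forall s', is_path n m v s' -> (forall st, st \in s' -> st != (Lsh, 0%N)) ->
        (size s <= size s')%N.
      move=> s' hs' hw'; by apply: hmin.
    have H2 : Ps2 m v by move=> j hj; apply: hsum; lia.
    exact: (@part2_full n m v s hn hm hv hp hallR H1 H2 k hk E).
  + have [b hb'] : exists b : nat, p2 = b%:Z by exists (absz p2); lia.
    subst p2.
    have H1 : (b <= m)%N by lia.
    have H2 : forall st, st \in s -> st.2 != b.
      move=> st hst; have := hp2w st hst; lia.
    have H3 : forall st, st \in s -> (st.2 < b)%N -> st.1 = Rsh.
      move=> st hst hast; apply: hR => //; lia.
    have H4 := hsum b ltac:(lia).
    exact: (@part2_inner n m v s b hn hp H1 H2 H3 H4 k hk E).
Qed.
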